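(* Let $G=(V,E)$ be a graph of order $n$ such that $\frac{n}{2}<\tau(G)=\tau=n-k$, and let $W$ be its $\tau$-set. If $G[W]\cong K_\tau$, then $\beta_p(G)\le n-\frac{k}{2}$.
   Context: All graphs are finite, simple, undirected and connected. Two vertices $u,v$ are twins if $N(u)\setminus\{v\}=N(v)\setminus\{u\}$; twin classes are the equivalence classes of this relation, and the twin number $\tau(G)$ is the maximum cardinality of a twin class. A $\tau$-set is a set of pairwise twin vertices of cardinality $\tau(G)$. For a partition $\Pi=\{S_1,\dots,S_k\}$ of $V(G)$, $r(u|\Pi)=(d(u,S_1),\dots,d(u,S_k))$ with $d(u,S)=\min_{w\in S}d(u,w)$; $\Pi$ is locating if $r(u|\Pi)\ne r(v|\Pi)$ for all distinct $u,v$; $\beta_p(G)$ is the minimum size of a locating partition. *)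

(* Defs.v *)
From mathcomp Require Import all_boot all_order.
Set Implicit Arguments. Unset Strict Implicit. Unset Printing Implicit Defensive.

Section Graph.
Variables (T : finType) (e : rel T).

Definition simple_graph := symmetric e /\ irreflexive e.
Definition connected_graph := forall u v : T, connect e u v.

Definition nbhd (u : T) : {set T} := [set w | e u w].

Fixpoint ball (k : nat) (u : T) : {set T} :=
  match k with
  | 0 => [set u]
  | k'.+1 => ball k' u :|: [set y | [exists x in ball k' u, e x y]]
  end.

(* graph distance: least k with v in ball k u (for connected graphs this is
   < #|T|; the fallback value #|T| is never reached then) *)
Definition dist (u v : T) : nat := find (fun k => v \in ball k u) (iota 0 #|T|).

Definition dist_set (u : T) (S : {set T}) : nat :=
  \big[minn/#|T|]_(w in S) dist u w.

Definition twin (u v : T) : bool := (nbhd u :\ v) == (nbhd v :\ u).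

Definition twin_class (u : T) : {set T} := [set v | twin u v].

Definition tau : nat := \max_(u : T) #|twin_class u|.

Definition tau_set (W : {set T}) : bool :=
  [forall x in W, forall y in W, twin x y] && (#|W| == tau).

Definition is_clique (W : {set T}) : bool :=
  [forall x in W, forall y in W, (x != y) ==> e x y].

(* locating partition: a partition of V such that distinct vertices have
   distinct distance vectors (r(u|P) <> r(v|P) iff some class separates) *)
Definition locating_partition (P : {set {set T}}) : bool :=
  partition P [set: T] &&
  [forall u, forall v, (u != v) ==> [exists S in P, dist_set u S != dist_set v S]].

Definition beta_p : nat :=
  \big[minn/#|T|]_(P : {set {set T}} | locating_partition P) #|P|.

End Graph.

(* Main.v *)
Require Import Defs.
From mathcomp Require Import all_boot all_order.
From mathcomp Require Import zify.
Set Implicit Arguments. Unset Strict Implicit. Unset Printing Implicit Defensive.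

Section L.
Variables (T : finType) (e : rel T).

Lemma bigmin_le_seq (I : eqType) (r : seq I) (P : pred I) (F : I -> nat) m i0 :
  i0 \in r -> P i0 -> \big[minn/m]_(i <- r | P i) F i <= F i0.
Proof.
elim: r => // a r IH; rewrite inE big_cons => /orP [/eqP <-|Hr] Pa.
  by rewrite Pa geq_minl.
case: (P a); last by apply: IH.
by apply: leq_trans (geq_minr _ _) (IH Hr Pa).
Qed.

Lemma bigmin_le (I : finType) (P : pred I) (F : I -> nat) m i0 :
  P i0 -> \big[minn/m]_(i | P i) F i <= F i0.
Proof. move=> Pi; apply: bigmin_le_seq => //; exact: mem_index_enum. Qed.

Lemma dist0 u v : (dist e u v == 0) = (u == v).
Proof.
rewrite /dist.
have hT : 0 < #|T| by apply/card_gt0P; exists u.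
case: #|T| hT => // n _ /=.
rewrite !inE; case: (v =P u) => [->|nvu] /=; first by rewrite !eqxx.
by apply/esym/eqP => H; apply: nvu; rewrite H.
Qed.

Lemma dist1 u v : 1 < #|T| -> u != v -> (dist e u v == 1) = e u v.
Proof.
move=> hT uv; rewrite /dist.
case: #|T| hT => // [] [] // n _ /=.
have vu : (v == u) = false by rewrite eq_sym (negbTE uv).
rewrite !inE vu /=.
case: (boolP [exists x in [set u], e x v]) => [/existsP [x /andP [/set1P -> ->]]|Hn] //.
rewrite /=; apply/esym/negbTE; apply: contra Hn => He; apply/existsP; exists u; by rewrite !inE eqxx.
Qed.

Lemma dist_le u v : dist e u v <= #|T|.
Proof. rewrite /dist. have := find_size (fun k => v \in ball e k u) (iota 0 #|T|). by rewrite size_iota. Qed.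

Lemma dist_set0 u S : (dist_set e u S == 0) = (u \in S).
Proof.
rewrite /dist_set.
have hT : 0 < #|T| by apply/card_gt0P; exists u.
apply/idP/idP.
- elim/big_rec: _ => [|w m Sw IH]; first by rewrite eqn0Ngt hT.
  rewrite /minn; case: ltnP => _ H; last by apply: IH.
  by rewrite dist0 in H; rewrite (eqP H).
- move=> uS; rewrite -leqn0; apply: leq_trans (@bigmin_le T (fun w => w \in S) (fun w => dist e u w) #|T| u uS) _.
  by rewrite leqn0 dist0.
Qed.

Lemma dist_set1 u S : 1 < #|T| ->
  (dist_set e u S == 1) = (u \notin S) && [exists y in S, e u y].
Proof.
move=> hT.
have le1 : (dist_set e u S <= 1) = [exists y in S, dist e u y <= 1].
  rewrite /dist_set.
  apply/idP/idP.
  - elim/big_rec: _ => [|w m Sw IH]; first by rewrite leqNgt hT.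
    rewrite /minn; case: ltnP => _ H; last by apply: IH.
    by apply/existsP; exists w; rewrite Sw.
  - case/existsP=> y /andP [Sy Hy].
    by apply: leq_trans (@bigmin_le T (fun w => w \in S) (fun w => dist e u w) #|T| y Sy) Hy.
rewrite eqn_leq le1 lt0n dist_set0 andbC.
case: (boolP (u \in S)) => uS //=.
apply/existsP/existsP => [] [y /andP [Sy Hy]]; exists y; rewrite Sy /=.
- have uy : u != y by apply: contraNneq uS => ->.
  rewrite -(dist1 hT uy) eqn_leq Hy lt0n dist0 uy.
  done.
- have uy : u != y by apply: contraNneq uS => ->.
  by rewrite -(dist1 hT uy) in Hy; rewrite (eqP Hy).
Qed.

End L.

Lemma ore_dom (T : finType) (H : rel T) (X XN : {set T}) :
  symmetric H -> irreflexive H -> XN \subset X ->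
  (forall x, x \in XN -> exists2 y, y \in X & H x y) ->
  exists Y : {set T}, [/\ Y \subset X, 2 * #|Y| <= #|X| &
     forall x, x \in XN -> x \notin Y -> exists2 y, y \in Y & H x y].
Proof.
move=> Hs Hi sXN Hex.
pose dom (Y : {set T}) := [forall x in XN :\: Y, [exists y in Y, H x y]].
have domP (Y : {set T}) : reflect (forall x, x \in XN -> x \notin Y -> exists2 y, y \in Y & H x y) (dom Y).
  apply: (iffP forall_inP) => [D x xN xY|D x].
    have := D x; rewrite !inE xN xY /= => /(_ isT) /exists_inP [y yY Hxy]; by exists y.
  rewrite !inE => /andP [xY xN]; have [y yY Hxy] := D x xN xY.
  by apply/exists_inP; exists y.
have exn : exists n, [exists Y : {set T}, [&& Y \subset X, dom Y & #|Y| == n]].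
  exists #|X|; apply/existsP; exists X; rewrite subxx eqxx andbT /=.
  apply/domP => x xN; by rewrite (subsetP sXN).
case: (ex_minnP exn) => n /existsP [Y /and3P [sY dY /eqP cY]] minY.
exists Y; split => //; last exact/domP.
have dC : dom (X :\: Y).
  apply/domP => y yN; rewrite inE (subsetP sXN _ yN) andbT negbK => yY.
  have cY' : #|Y :\ y| < n by rewrite -cY (cardsD1 y Y) yY.
  case: (boolP (dom (Y :\ y))) => dY'.
    have H0 := minY #|Y :\ y|; rewrite leqNgt cY' in H0.
    suff: false by []. apply: H0.
    by apply/existsP; exists (Y :\ y); rewrite dY' eqxx andbT (subset_trans (subD1set _ _) sY).
  case/forall_inPn: dY' => x; rewrite !inE negb_and negbK => /andP [xYy xN].
  move/exists_inPn => nH.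
  case: (x =P y) => [exy|nxy].
    rewrite -exy in yY *; have [z zX Hyz] := Hex x xN.
    exists z => //; rewrite inE zX andbT; apply/negP => zY.
    have zx : z != x by apply: contraTneq Hyz => ->; rewrite Hi.
    by move: (nH z); rewrite in_setD1 -exy zx zY Hyz => /(_ isT).
  have xY : x \notin Y by move: xYy; case: (x =P y).
  have [z zY Hxz] := (elimT (domP Y) dY) x xN xY.
  have ezy : z = y.
    apply/eqP; apply: contraTT Hxz => nzy; apply: nH; by rewrite !inE nzy.
  subst z; exists x; last by rewrite Hs.
  by rewrite inE xY (subsetP sXN).
have := minY #|X :\: Y|; rewrite -cY => H0.
have : #|Y| <= #|X :\: Y|.
  apply: H0; apply/existsP; exists (X :\: Y); by rewrite dC eqxx subsetDl.
by rewrite (cardsD X Y) (setIidPr sY) mul2n -addnn => /(leq_add (leqnn #|Y|)); rewrite subnKC // subset_leq_card.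
Qed.

Theorem theorem16 (T : finType) (e : rel T) (W : {set T}) :
  simple_graph e -> connected_graph e ->
  (#|T| < 2 * tau e)%N ->
  tau_set e W -> is_clique e W ->
  (2 * beta_p e <= 2 * #|T| - (#|T| - tau e))%N.
Proof.
move=> [Hsym Hirr] _ Hlt /andP [/forall_inP twW /eqP cW] /forall_inP cl.
set t := tau e in Hlt cW *.
have twP w w' : w \in W -> w' \in W -> twin e w w'.
  by move=> wW w'W; have := twW w wW => /forall_inP; apply.
have clP w w' : w \in W -> w' \in W -> w != w' -> e w w'.
  by move=> wW w'W; have := cl w wW => /forall_inP /(_ w' w'W) /implyP.
have tpos : 0 < t by lia.
have [w0 w0W] : exists w0, w0 \in W by apply/card_gt0P; rewrite cW.
have nbW w x : w \in W -> x \notin W -> e w x = e w0 x.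
  move=> wW xW; have := twP w w0 wW w0W => /eqP /setP /(_ x).
  rewrite !inE.
  have -> : (x != w0) by apply: contraNneq xW => ->.
  have -> : (x != w) by apply: contraNneq xW => ->.
  by [].
have notwin w x : w \in W -> x \notin W -> ~~ twin e w x.
  move=> wW xW; apply/negP => twx.
  have : #|x |: W| <= t.
    apply: leq_trans (_ : #|twin_class e w| <= t).
      apply: subset_leq_card; apply/subsetP => z; rewrite !inE => /orP [/eqP ->|zW] //.
      exact: twP.
    exact: (leq_bigmax w).
  by rewrite cardsU1 xW cW ltnn.
pose inN x := e w0 x.
pose X := ~: W.
pose XN := [set x in X | inN x].
pose H := fun x y => (x != y) && (e x y != (inN x && inN y)).
have Hs : symmetric H.
  by move=> x y; rewrite /H [y == x]eq_sym [e y x]Hsym [inN y && _]andbC.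
have Hi : irreflexive H by move=> x; rewrite /H eqxx.
have sXN : XN \subset X by apply/subsetP => x; rewrite /XN inE => /andP [].
have Hex x : x \in XN -> exists2 y, y \in X & H x y.
  rewrite /XN inE => /andP [xX xN]; have xW : x \notin W by rewrite /X inE in xX.
  case: (boolP [exists y in X, H x y]) => [/exists_inP [y yX Hxy]|hn]; first by exists y.
  exfalso; apply/negP: (notwin w0 x w0W xW).
  rewrite /twin negbK; apply/eqP/setP => z; rewrite !inE.
  case: (boolP (z \in W)) => zW.
    have zx : z != x by apply: contraNneq xW => <-.
    rewrite zx /= [e x z]Hsym (nbW z x zW xW) (_ : e w0 x = true) // andbT.
    case: (z =P w0) => [->|/eqP nz]; first by rewrite Hirr.
    by rewrite clP // eq_sym.
  have -> : z != w0 by apply: contraNneq zW => ->.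
  case: (z =P x) => [->|/eqP zx]; first by rewrite Hirr.
  move/exists_inPn: hn => /(_ z); rewrite inE zW /= /H eq_sym zx /= => /(_ isT).
  by rewrite negbK xN /= => /eqP ->.
have [Y [sY cY domY]] := ore_dom Hs Hi sXN Hex.
have YX y : y \in Y -> y \notin W by move=> yY; have := subsetP sY y yY; rewrite /X inE.
pose Z := X :\: Y.
pose W' := W :\ w0.
have cX : #|W| + #|X| = #|T| by rewrite /X cardsC.
have cZW : #|Z| <= #|W'|.
  have cW1 : 1 + #|W'| = #|W| by rewrite /W' (cardsD1 w0 W) w0W.
  have : #|Z| <= #|X| by apply: subset_leq_card; apply: subsetDl.
  move: cW1 cX; rewrite cW; lia.
pose g z := nth w0 (enum W') (index z (enum Z)).
have gW z : z \in Z -> g z \in W'.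
  move=> zZ; rewrite /g -mem_enum; apply: mem_nth.
  rewrite -cardE; apply: leq_trans cZW; rewrite cardE index_mem mem_enum //.
have ginj z1 z2 : z1 \in Z -> z2 \in Z -> g z1 = g z2 -> z1 = z2.
  move=> z1Z z2Z /eqP; rewrite /g nth_uniq ?enum_uniq //; last first.
  - rewrite -cardE; apply: leq_trans cZW; rewrite cardE index_mem mem_enum //.
  - rewrite -cardE; apply: leq_trans cZW; rewrite cardE index_mem mem_enum //.
  move=> /eqP Hi'; rewrite -[z1](@nth_index _ w0 z1 (enum Z)) ?mem_enum // Hi' nth_index // mem_enum //.
have ZP v : (v \in Z) = (v \notin W) && (v \notin Y) by rewrite /Z /X !inE andbC.
pose f v := if v \in W then v else if v \in Y then v else g v.
have fW v : v \in W -> f v = v by rewrite /f => ->.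
have fY v : v \in Y -> f v = v by move=> vY; rewrite /f (negbTE (YX v vY)) vY.
have fZ v : v \in Z -> f v = g v by rewrite ZP => /andP [/negbTE a /negbTE b]; rewrite /f a b.
have gW2 z : z \in Z -> (g z \in W) && (g z != w0).
  by move=> zZ; have := gW z zZ; rewrite /W' !inE andbC.
have vcase v : [\/ v \in W, v \in Y | v \in Z].
  rewrite ZP; case: (boolP (v \in W)) => vW; first by constructor 1.
  case: (boolP (v \in Y)) => vY; first by constructor 2. by constructor 3.
have fcase u v : u != v -> f u = f v ->
   (u \in W /\ v \in Z /\ g v = u) \/ (v \in W /\ u \in Z /\ g u = v).
  move=> /eqP uv; case: (vcase u) => Hu; case: (vcase v) => Hv.
  - by rewrite (fW _ Hu) (fW _ Hv).
  - by rewrite (fW _ Hu) (fY _ Hv) => E; case: uv.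
  - by rewrite (fW _ Hu) (fZ _ Hv) => E; left.
  - by rewrite (fY _ Hu) (fW _ Hv) => E; case: uv.
  - by rewrite (fY _ Hu) (fY _ Hv) => E; case: uv.
  - rewrite (fY _ Hu) (fZ _ Hv) => E.
    by move: (YX _ Hu); rewrite E; case/andP: (gW2 _ Hv) => ->.
  - by rewrite (fZ _ Hu) (fW _ Hv) => E; right.
  - rewrite (fZ _ Hu) (fY _ Hv) => E.
    by move: (YX _ Hv); rewrite -E; case/andP: (gW2 _ Hu) => ->.
  - by rewrite (fZ _ Hu) (fZ _ Hv) => E; case: uv; apply: ginj.
pose P := preim_partition f [set: T].
have ClP x : [set y in [set: T] | f x == f y] \in P.
  by apply/imsetP; exists x.
have ClE x y : (y \in [set y in [set: T] | f x == f y]) = (f x == f y) by rewrite !inE.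
have single u y (S : {set T}) : (forall z, (z \in S) = (z == y)) -> 1 < #|T| ->
    (dist_set e u S == 1) = (u != y) && e u y.
  move=> Sy hT; rewrite dist_set1 // Sy; congr (_ && _).
  apply/exists_inP/idP => [[z] |]; first by rewrite Sy => /eqP ->.
  by move=> uy; exists y; rewrite ?Sy.
have neq1 a b : (a == 1) != (b == 1) -> a != b by apply: contraNneq => ->.
have sep w x : w \in W -> x \in Z -> g x = w ->
    [exists S in P, dist_set e w S != dist_set e x S].
  move=> wW xZ gxw.
  have xW : x \notin W by move: xZ; rewrite ZP => /andP [].
  have xY : x \notin Y by move: xZ; rewrite ZP => /andP [].
  have ww0 : w != w0 by have := gW2 x xZ; rewrite gxw => /andP [].
  have hT : 1 < #|T|.
    apply/card_gt1P; exists w, x; split => //; apply: contraNneq xW => <-; exact: wW.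
  case: (boolP (inN x)) => xN.
  - have xXN : x \in XN by rewrite /XN inE xN andbT /X inE.
    have [y yY Hxy] := domY x xXN xY.
    have yW := YX y yY.
    have Cy z : (z \in [set y0 in [set: T] | f y == f y0]) = (z == y).
      rewrite ClE (fY _ yY); case: (vcase z) => Hz.
      + rewrite (fW _ Hz); apply/idP/idP => /eqP E; first by move: yW; rewrite E Hz.
        by move: yW; rewrite -E Hz.
      + by rewrite (fY _ Hz) eq_sym.
      + rewrite (fZ _ Hz); apply/idP/idP => /eqP E.
          by move: yW; rewrite E; case/andP: (gW2 _ Hz) => ->.
        by move: Hz; rewrite E ZP yY andbF.
    apply/exists_inP; exists [set y0 in [set: T] | f y == f y0] => //.
    apply: neq1; rewrite !(single _ y _ Cy hT).
    have -> : w != y by apply: contraNneq yW => <-.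
    rewrite (nbW w y wW yW) /=.
    move: Hxy; rewrite /H xN /= => /andP [-> ].
    by rewrite /inN; case: (e x y); case: (e w0 y).
  - have Cw z : (z \in [set y0 in [set: T] | f w0 == f y0]) = (z == w0).
      rewrite ClE (fW _ w0W); case: (vcase z) => Hz.
      + by rewrite (fW _ Hz) eq_sym.
      + rewrite (fY _ Hz); apply/idP/idP => /eqP E.
          by move: (YX _ Hz); rewrite -E w0W.
        by move: (YX _ Hz); rewrite E w0W.
      + rewrite (fZ _ Hz); apply/idP/idP => /eqP E.
          by case/andP: (gW2 _ Hz); rewrite E eqxx.
        by move: Hz; rewrite E ZP w0W.
    apply/exists_inP; exists [set y0 in [set: T] | f w0 == f y0] => //.
    apply: neq1; rewrite !(single _ w0 _ Cw hT) ww0 clP //=.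
    by rewrite Hsym; move: xN; rewrite /inN => /negbTE ->; rewrite andbF.
have loc : locating_partition e P.
  apply/andP; split; first exact: preim_partitionP.
  apply/forallP => u; apply/forallP => v; apply/implyP => uv.
  case: (boolP (f u == f v)) => [/eqP E|nE].
  - case: (fcase u v uv E) => [[uW [vZ gv]]|[vW [uZ gu]]]; first exact: sep.
    have := sep v u vW uZ gu; case/exists_inP => S SP HS.
    by apply/exists_inP; exists S => //; rewrite eq_sym.
  - apply/exists_inP; exists [set y0 in [set: T] | f u == f y0] => //.
    rewrite (_ : dist_set e u _ = 0); last by apply/eqP; rewrite dist_set0 ClE eqxx.
    by rewrite eq_sym dist_set0 ClE.
have cP : #|P| <= #|W| + #|Y|.
  have sP : P \subset [set [set y in [set: T] | l == f y] | l in W :|: Y].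
    apply/subsetP => S /imsetP [x _ ->]; apply/imsetP; exists (f x) => //.
    rewrite inE; case: (vcase x) => Hx.
    - by rewrite (fW _ Hx) Hx.
    - by rewrite (fY _ Hx) Hx orbT.
    - by rewrite (fZ _ Hx); case/andP: (gW2 _ Hx) => ->.
  apply: leq_trans (subset_leq_card sP) _.
  apply: leq_trans (leq_imset_card _ _) _.
  by rewrite cardsU leq_subr.
have bP : beta_p e <= #|P|.
  exact: (@bigmin_le _ (fun Q => locating_partition e Q) (fun Q => #|Q|) #|T| P loc).
move: cX cY cP bP; rewrite cW /X; lia.
Qed.
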